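(* Let $n\ge m\ge 0$ be integers with $n\equiv m \pmod 2$. Then $$\int_{-\infty}^{\infty} f_n(x) f_m(x)\,dx = \binom{n+m}{\frac{n+m}{2}}.$$
   Context: For $A\subseteq\mathbb{R}$, $\chi_A$ denotes the characteristic function of $A$. Define functions $f_n:\mathbb{R}\to\mathbb{R}$, $n = 0,1,2,\dots$, recursively by $f_0 = \chi_{(-1/2,1/2)}$ and $f_{n+1}(x) = f_n(x+1/2) + f_n(x-1/2)$ for all $x\in\mathbb{R}$. *)

(* Defs.v *)
From HB Require Import structures.
From mathcomp Require Import all_boot all_order all_algebra.
From mathcomp Require Import all_classical all_reals all_analysis.
Unset Printing Implicit Defensive.
Import Order.TTheory GRing.Theory Num.Theory.
Local Open Scope classical_set_scope.
Local Open Scope ring_scope.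

Fixpoint fseq (R : realType) (n : nat) : R -> R :=
  match n with
  | 0%N => \1_(`](- (2%:R^-1)), 2%:R^-1[%classic) : R -> R
  | k.+1 => fun x => fseq R k (x + 2%:R^-1) + fseq R k (x - 2%:R^-1)
  end.

(* Main.v *)
Require Import Defs.
From HB Require Import structures.
From mathcomp Require Import all_boot all_order all_algebra.
From mathcomp Require Import all_classical all_reals all_analysis.
From mathcomp Require Import measurable_realfun ring lra zify.
Import Order.TTheory GRing.Theory Num.Theory.
Local Open Scope ring_scope.
Local Open Scope classical_set_scope.

Definition cf (n m : nat) (p : ('I_n.+1 * 'I_m.+1)%type) : nat :=
  ('C(n, p.1) * 'C(m, p.2) * (n + 2 * p.2 == m + 2 * p.1))%N.
Arguments cf {n m}.

Section H.
Variable R : realType.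
Let h : R := 2%:R^-1.

Lemma f0E (y : R) : fseq R 0 y = ((- h < y) && (y < h))%:R.
Proof. by rewrite /= indicE mem_setE in_itv. Qed.

Lemma f0_shift (x a : R) :
  fseq R 0 (x + a) = \1_([set` `](- h - a), (h - a)[%R]) x.
Proof.
rewrite f0E indicE mem_setE in_itv /=.
by rewrite ltrBlDr ltrBrDr.
Qed.

Lemma fseqE n x : fseq R n x =
  \sum_(k < n.+1) 'C(n, k)%:R * fseq R 0 (x + (n%:R * h - k%:R)).
Proof.
elim: n x => [|n IH] x.
  by rewrite big_ord_recl big_ord0 bin0 mul1r addr0 !mul0r subr0 addr0.
rewrite [LHS]/= !IH.
set g := fun k : nat => fseq R 0 (x + (n.+1%:R * h - k%:R)).
have E1 : \sum_(k < n.+1) 'C(n, k)%:R * fseq R 0 (x + h + (n%:R * h - k%:R))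
   = \sum_(k < n.+1) 'C(n, k)%:R * g k.
  apply: eq_bigr => k _; rewrite /g; congr (_ * fseq R 0 _).
  rewrite -natr1 /h; by field.
have E2 : \sum_(k < n.+1) 'C(n, k)%:R * fseq R 0 (x - h + (n%:R * h - k%:R))
   = \sum_(k < n.+1) 'C(n, k)%:R * g k.+1.
  apply: eq_bigr => i _; rewrite /g; congr (_ * fseq R 0 _).
  rewrite -natr1 /h -(natr1 i); by field.
rewrite E1 E2.
rewrite [RHS](eq_bigr (fun k : 'I_n.+2 => 'C(n.+1, k)%:R * g k)) //.
rewrite (big_ord_recl n.+1) bin0.
rewrite [in RHS](eq_bigr (fun i : 'I_n.+1 => 'C(n, i.+1)%:R * g i.+1 + 'C(n, i)%:R * g i.+1)); last first.
  by move=> i _; rewrite lift0 binS natrD mulrDl.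
rewrite big_split /= [RHS]addrA mul1r; congr (_ + _).
rewrite big_ord_recl bin0 big_ord_recr /= bin_small // mul0r addr0.
by rewrite mul1r.
Qed.

Lemma f0_sq (y : R) : fseq R 0 y * fseq R 0 y = fseq R 0 y.
Proof. by rewrite f0E; case: (_ && _); rewrite ?mulr1 ?mulr0. Qed.

Lemma f0_prod (n m k j : nat) (x : R) : (n %% 2 = m %% 2)%N ->
  fseq R 0 (x + (n%:R * h - k%:R)) * fseq R 0 (x + (m%:R * h - j%:R))
  = (n + 2 * j == m + 2 * k)%N%:R * fseq R 0 (x + (n%:R * h - k%:R)).
Proof.
move=> Hmod.
have [E|E] := eqVneq (n + 2 * j)%N (m + 2 * k)%N.
  rewrite mul1r.
  have -> : m%:R * h - j%:R = n%:R * h - k%:R :> R.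
    have E' : (n + 2 * j)%N%:R = (m + 2 * k)%N%:R :> R by rewrite E.
    rewrite !natrD ?addr0 in E'; rewrite /h; lra.
  exact: f0_sq.
rewrite mul0r !f0E.
have [Hlt|Hlt] : ((n + 2 * j) + 2 <= m + 2 * k)%N \/ ((m + 2 * k) + 2 <= n + 2 * j)%N.
  move/eqP: E => E; lia.
- have : ((n + 2 * j) + 2)%N%:R <= (m + 2 * k)%N%:R :> R by rewrite ler_nat.
  rewrite !natrD ?addr0 => Hr.
  case: (boolP (_ && _)) => [/andP [H1 H2]|]; last by rewrite mul0r.
  case: (boolP (_ && _)) => [/andP [H3 H4]|]; last by rewrite mulr0.
  exfalso; rewrite /h in H1 H2 H3 H4; clear E Hlt Hmod; lra.
- have : ((m + 2 * k) + 2)%N%:R <= (n + 2 * j)%N%:R :> R by rewrite ler_nat.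
  rewrite !natrD ?addr0 => Hr.
  case: (boolP (_ && _)) => [/andP [H1 H2]|]; last by rewrite mul0r.
  case: (boolP (_ && _)) => [/andP [H3 H4]|]; last by rewrite mulr0.
  exfalso; rewrite /h in H1 H2 H3 H4; clear E Hlt Hmod; lra.
Qed.



Lemma prodE (n m : nat) (x : R) : (n %% 2 = m %% 2)%N ->
  fseq R n x * fseq R m x =
  \sum_(p : ('I_n.+1 * 'I_m.+1)%type) (cf p)%:R * fseq R 0 (x + (n%:R * h - p.1%:R)).
Proof.
move=> Hmod; rewrite !fseqE big_distrlr /= pair_bigA /=.
apply: eq_bigr => p _.
rewrite mulrACA f0_prod // /cf !natrM mulrA.
by [].
Qed.

Lemma int_f0 (a : R) :
  (\int[@lebesgue_measure R]_x (fseq R 0 (x + a))%:E = 1)%E.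
Proof.
under eq_integral do rewrite f0_shift.
rewrite integral_indic //= setIT lebesgue_measure_itv /=.
rewrite lte_fin ifT; last by rewrite /h; lra.
by rewrite -EFinD; congr (_%:E); rewrite /h; field.
Qed.

Lemma mf0 (c a : R) :
  measurable_fun [set: R] ((fun x : R => (c * fseq R 0 (x + a))%:E) : R -> \bar R).
Proof.
apply/measurable_EFinP; apply: measurable_funM; first exact: measurable_cst.
rewrite (_ : (fun x => _) = \1_([set` `](- h - a), (h - a)[%R])); last first.
  by apply/funext => x; rewrite f0_shift.
exact: measurable_indic.
Qed.

Lemma f0_ge0 (y : R) : 0 <= fseq R 0 y.
Proof. by rewrite f0E ler0n. Qed.

Lemma int_prod (n m : nat) : (n %% 2 = m %% 2)%N ->
  (\int[@lebesgue_measure R]_x ((fseq R n x * fseq R m x)%:E))%E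
  = (\sum_(p : ('I_n.+1 * 'I_m.+1)%type) cf p)%:R%:E.
Proof.
move=> Hmod.
under eq_integral do rewrite prodE // -sumEFin.
rewrite ge0_integral_sum //; last 2 first.
- by move=> p; exact: mf0.
- by move=> p x _; rewrite lee_fin mulr_ge0 // f0_ge0.
rewrite natr_sum -sumEFin; apply: eq_bigr => p _.
under eq_integral do rewrite EFinM. rewrite ge0_integralZl_EFin //.
- by rewrite int_f0 mule1.
- by move=> x _; rewrite lee_fin f0_ge0.
- have := mf0 1 (n%:R * h - p.1%:R); by under eq_fun do rewrite mul1r.
Qed.
End H.

Lemma cf_sum (n m : nat) : (m <= n)%N -> (n %% 2 = m %% 2)%N ->
  (\sum_(p : ('I_n.+1 * 'I_m.+1)%type) cf p = 'C(n + m, (n + m) %/ 2))%N.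
Proof.
move=> Hmn Hmod.
set d := ((n - m) %/ 2)%N.
have hn : n = (m + 2 * d)%N by rewrite /d; lia.
rewrite -(pair_bigA _ (fun i j => cf (i, j))) /= exchange_big /=.
rewrite (eq_bigr (fun j : 'I_m.+1 => 'C(n, j + d) * 'C(m, j)))%N; last first.
  move=> j _.
  have Hj : (j + d < n.+1)%N by have := ltn_ord j; lia.
  rewrite (bigD1 (Ordinal Hj)) //= big1 ?addn0.
    rewrite /cf /=.
    have -> : (n + 2 * j == m + 2 * (j + d))%N by apply/eqP; lia.
    by rewrite muln1.
  move=> i Hi; rewrite /cf /=.
  have -> : (n + 2 * j == m + 2 * i)%N = false.
    apply/negbTE/eqP => E; move/eqP: Hi; apply; apply/val_inj => /=; lia.
  by rewrite muln0.
have -> : ((n + m) %/ 2 = m + d)%N by lia.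
rewrite addnC -binomial.Vandermonde.
rewrite (big_ord_widen (m + d).+1 (fun j => 'C(n, j + d) * 'C(m, j)))%N; last lia.
rewrite big_mkcond /=; apply: eq_bigr => j _.
case: ifP => Hj.
  rewrite mulnC; congr (_ * _)%N; rewrite -bin_sub; last lia.
  congr 'C(_, _); lia.
by rewrite bin_small ?mul0n //; lia.
Qed.

Local Close Scope classical_set_scope.

Theorem mainTheorem5 (R : realType) (n m : nat) :
  (m <= n)%N -> n = m %[mod 2] ->
  (\int[@lebesgue_measure R]_x ((fseq R n x * fseq R m x)%:E))%E
    = ('C(n + m, (n + m) %/ 2))%:R%:E.
Proof.
by move=> Hmn Hmod; rewrite int_prod // cf_sum.
Qed.
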